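(* Let $\mathcal M=\langle M,<,+,\{x\mapsto\lambda x\}_{\lambda\in\Lambda}\rangle$ be an ordered vector space over an ordered division ring $\Lambda$. Then every linear cell $C\subseteq M^n$ can be partitioned into finitely many product cells.
   Context: Let $\pi:M^n\to M^{n-1}$ be the projection onto the first $n-1$ coordinates; for $x\in M^n$ and $N\in M_{\ge0}$, $B_N(x)=x+[-N,N]^n$. A linear map on $X\subseteq M^n$ is one of the form $x\mapsto\lambda_1x_1+\dots+\lambda_nx_n+a$ ($\lambda_i\in\Lambda$, $a\in M$); $L(X)$ is the set of such maps and $L_\infty(X)=L(X)\cup\{\pm\infty\}$. Linear cells: $M^0$ is the linear cell in $M^0$; a linear cell in $M^{k+1}$ is either the graph $\Gamma(\alpha)$ of some $\alpha\in L(X)$ or a cylinder $(\alpha,\beta)=\{(x,y):x\in X,\alpha(x)<y<\beta(x)\}$ with $\alpha,\beta\in L_\infty(X)$, $\alpha<\beta$ on $X$, where $X\subseteq M^k$ is a linear cell. Purely unbounded sets $C\subseteq M^n$ (recursively): $C=M^0$ if $n=0$; for $n>0$, either $C$ is the graph of a function on $\pi(C)$ and $\pi(C)$ is purely unbounded, or $C$ is not such a graph, $\pi(C)$ is purely unbounded, and for every $N\in M_{\ge0}$ there is $x\in C$ with $C_{\pi(x)}\not\subseteq B_N(x_n)$, where $C_{\pi(x)}=\{t:(\pi(x),t)\in C\}$. A product cell is a linear cell $C$ of the form $C=J+D$ where $J$ is a purely unbounded linear cell, $D$ is a bounded linear cell, and every $c\in C$ can be written uniquely as $c=g+d$ with $g\in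 J$, $d\in D$. *)

(* Defs.v *)
From HB Require Import structures.
From mathcomp Require Import all_boot all_order all_algebra.
Set Implicit Arguments. Unset Strict Implicit. Unset Printing Implicit Defensive.
Import GRing.Theory.
Local Open Scope ring_scope.

Definition strict_total_order (T : Type) (lt : T -> T -> Prop) : Prop :=
  (forall x, ~ lt x x) /\
  (forall x y z, lt x y -> lt y z -> lt x z) /\
  (forall x y, lt x y \/ x = y \/ lt y x).

(** An ordered division ring: a (possibly non-commutative) nontrivial ring
    with a strict total order compatible with + and *, in which every nonzero
    element is invertible. *)
Definition ordered_division_ring (R : nzRingType) (lt : R -> R -> Prop) : Prop :=
  strict_total_order lt /\
  (forall x y z, lt x y -> lt (x + z) (y + z)) /\
  (forall x y, lt 0 x -> lt 0 y -> lt 0 (x * y)) /\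
  (forall x : R, x != 0 -> exists y, x * y = 1 /\ y * x = 1).

Definition ordered_vector_space (R : nzRingType) (ltR : R -> R -> Prop)
    (M : lmodType R) (lt : M -> M -> Prop) : Prop :=
  strict_total_order lt /\
  (forall x y z, lt x y -> lt (x + z) (y + z)) /\
  (forall (l : R) (x y : M), ltR 0 l -> lt x y -> lt (l *: x) (l *: y)).

Section Cells.
Variables (R : nzRingType) (M : lmodType R) (lt : M -> M -> Prop).

Definition le (x y : M) : Prop := lt x y \/ x = y.

Definition pt (n : nat) : Type := 'I_n -> M.

Definition proj (k : nat) (x : pt k.+1) : pt k :=
  fun j => x (widen_ord (leqnSn k) j).
Definition lastc (k : nat) (x : pt k.+1) : M := x ord_max.
Definition ext_pt (k : nat) (y : pt k) (t : M) : pt k.+1 :=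
  fun i => if unlift ord_max i is Some j then y j else t.

Record linmap (k : nat) := LinMap { lcoef : 'I_k -> R ; lconst : M }.
Definition leval (k : nat) (a : linmap k) (x : pt k) : M :=
  \sum_(i < k) lcoef a i *: x i + lconst a.

Inductive extmap (k : nat) := NegInf | Fin of linmap k | PosInf.
Inductive extM := MNeg | MFin of M | MPos.
Definition ext_lt (a b : extM) : Prop :=
  match a, b with
  | MNeg, MNeg => False
  | MNeg, _ => True
  | MFin x, MFin y => lt x y
  | MFin _, MPos => True
  | _, _ => False
  end.
Definition eeval (k : nat) (a : extmap k) (x : pt k) : extM :=
  match a with NegInf => MNeg | Fin f => MFin (leval f x) | PosInf => MPos end.

(** Linear cells (sets are predicates, described up to extensional equality). *)
Inductive linear_cell : forall n, (pt n -> Prop) -> Prop :=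
  | lc0 (C : pt 0 -> Prop) : (forall x, C x) -> linear_cell C
  | lc_graph (k : nat) (X : pt k -> Prop) (a : linmap k) (C : pt k.+1 -> Prop) :
      linear_cell X ->
      (forall x, C x <-> X (proj x) /\ lastc x = leval a (proj x)) ->
      linear_cell C
  | lc_cyl (k : nat) (X : pt k -> Prop) (a b : extmap k) (C : pt k.+1 -> Prop) :
      linear_cell X ->
      (forall y, X y -> ext_lt (eeval a y) (eeval b y)) ->
      (forall x, C x <-> X (proj x) /\ ext_lt (eeval a (proj x)) (MFin (lastc x))
                                    /\ ext_lt (MFin (lastc x)) (eeval b (proj x))) ->
      linear_cell C.

Definition proj_set (k : nat) (C : pt k.+1 -> Prop) : pt k -> Prop :=
  fun y => exists x, C x /\ (forall j, proj x j = y j).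

Definition is_graph_set (k : nat) (C : pt k.+1 -> Prop) : Prop :=
  forall x x', C x -> C x' -> (forall j, proj x j = proj x' j) -> lastc x = lastc x'.

Fixpoint purely_unbounded (n : nat) : (pt n -> Prop) -> Prop :=
  match n with
  | 0 => fun C => forall x, C x
  | k.+1 => fun C =>
      (is_graph_set C /\ purely_unbounded (proj_set C)) \/
      (~ is_graph_set C /\ purely_unbounded (proj_set C) /\
       forall N, le 0 N -> exists x, C x /\
         exists t, C (ext_pt (proj x) t) /\
                   ~ (le (lastc x - N) t /\ le t (lastc x + N)))
  end.

Definition bounded_set (n : nat) (D : pt n -> Prop) : Prop :=
  exists N, le 0 N /\ forall d, D d -> forall i, le (- N) (d i) /\ le (d i) N.

Definition product_cell (n : nat) (C : pt n -> Prop) : Prop :=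
  linear_cell C /\
  exists (J D : pt n -> Prop),
    linear_cell J /\ purely_unbounded J /\
    linear_cell D /\ bounded_set D /\
    (forall c, C c <-> exists g d, J g /\ D d /\ forall i, c i = g i + d i) /\
    (forall g g' d d', J g -> J g' -> D d -> D d' ->
       (forall i, g i + d i = g' i + d' i) ->
       (forall i, g i = g' i) /\ (forall i, d i = d' i)).

End Cells.

(* Main.v *)
Require Import Defs.
From mathcomp Require Import all_boot all_order all_algebra.
From Stdlib Require Import Classical FunctionalExtensionality PropExtensionality.
Set Implicit Arguments. Unset Strict Implicit. Unset Printing Implicit Defensive.
Import GRing.Theory.
Local Open Scope ring_scope.

Section Main.
Variables (R : nzRingType) (ltR : R -> R -> Prop) (M : lmodType R) (lt : M -> M -> Prop).
Hypothesis HR : ordered_division_ring ltR.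
Hypothesis HM : ordered_vector_space ltR lt.

Local Notation leM := (Defs.le lt).

Lemma ltxx x : ~ lt x x.
Proof. by case: HM => [[h _] _]. Qed.
Lemma lt_trans x y z : lt x y -> lt y z -> lt x z.
Proof. by case: HM => [[_ [h _]] _]; apply: h. Qed.
Lemma lt_tri x y : lt x y \/ x = y \/ lt y x.
Proof. by case: HM => [[_ [_ h]] _]. Qed.
Lemma ltD2r x y z : lt x y -> lt (x + z) (y + z).
Proof. by case: HM => [_ [h _]]; apply: h. Qed.
Lemma ltZ r x y : ltR 0 r -> lt x y -> lt (r *: x) (r *: y).
Proof. by case: HM => [_ [_ h]]; apply: h. Qed.
Lemma lt_asym x y : lt x y -> lt y x -> False.
Proof. by move=> a b; apply: (@ltxx x); apply: lt_trans a b. Qed.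
Lemma lt_neq x y : lt x y -> x <> y.
Proof. by move=> a e; subst; apply: ltxx a. Qed.
Lemma ltD2rE x y z : lt (x + z) (y + z) -> lt x y.
Proof. by move=> h; have := ltD2r (-z) h; rewrite !addrK. Qed.
Lemma ltD2l x y z : lt x y -> lt (z + x) (z + y).
Proof. by move=> h; rewrite ![z + _]addrC; apply: ltD2r. Qed.
Lemma ltD2lE x y z : lt (z + x) (z + y) -> lt x y.
Proof. by rewrite ![z + _]addrC; apply: ltD2rE. Qed.
Lemma lt_subr x y : lt x y <-> lt 0 (y - x).
Proof.
split=> h; first by have := ltD2r (-x) h; rewrite subrr.
by have := ltD2r x h; rewrite add0r subrK.
Qed.
Lemma lt_opp x y : lt x y -> lt (- y) (- x).
Proof.
move=> h; have := ltD2r (- x - y) h.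
by rewrite addrA subrr add0r addrCA subrr addr0.
Qed.
Lemma lt_oppE x y : lt (- y) (- x) -> lt x y.
Proof. by move/lt_opp; rewrite !opprK. Qed.
Lemma lt_add a b c d : lt a b -> lt c d -> lt (a + c) (b + d).
Proof. move=> h1 h2; apply: lt_trans (ltD2r c h1) (ltD2l b h2). Qed.
Lemma le_refl x : leM x x.
Proof. by right. Qed.
Lemma lt_le_trans x y z : lt x y -> leM y z -> lt x z.
Proof. by move=> h [h'|<-] //; apply: lt_trans h h'. Qed.
Lemma le_lt_trans x y z : leM x y -> lt y z -> lt x z.
Proof. by move=> [h|->] h' //; apply: lt_trans h h'. Qed.
Lemma le_trans x y z : leM x y -> leM y z -> leM x z.
Proof. by move=> [h|->] // h'; left; apply: lt_le_trans h h'. Qed.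
Lemma ltW x y : lt x y -> leM x y.
Proof. by left. Qed.
Lemma not_lt x y : ~ lt x y -> leM y x.
Proof. by move=> h; case: (lt_tri x y) => [//|[->|h']]; [right|left]. Qed.
Lemma not_le x y : ~ leM x y -> lt y x.
Proof. by move=> h; case: (lt_tri x y) => [h'|[e|//]]; case: h; [left|right]. Qed.
Lemma le_lt_false x y : leM x y -> lt y x -> False.
Proof. by move=> [h|->] h'; [apply: lt_asym h h'|apply: ltxx h']. Qed.
Lemma le_anti x y : leM x y -> leM y x -> x = y.
Proof. by move=> [h|//] [h'|//]; case: (lt_asym h h'). Qed.
Lemma le_add a b c d : leM a b -> leM c d -> leM (a + c) (b + d).
Proof.
move=> [h1|<-] [h2|<-]; [left; apply: lt_add|left; apply: ltD2r|left; apply: ltD2l|right] => //.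
Qed.
Lemma lt_le_add a b c d : lt a b -> leM c d -> lt (a + c) (b + d).
Proof. by move=> h1 [h2|<-]; [apply: lt_add|apply: ltD2r]. Qed.
Lemma le_lt_add a b c d : leM a b -> lt c d -> lt (a + c) (b + d).
Proof. by move=> [h1|<-] h2; [apply: lt_add|apply: ltD2l]. Qed.
Lemma le_opp x y : leM x y -> leM (- y) (- x).
Proof. by move=> [h|->]; [left; apply: lt_opp|right]. Qed.
Lemma le_subr x y : leM x y <-> leM 0 (y - x).
Proof.
split.
  case=> [h|->]; first by left; exact: (proj1 (lt_subr _ _) h).
  by right; rewrite subrr.
case=> [h|h]; first by left; exact: (proj2 (lt_subr _ _) h).
by right; move/esym/eqP: h; rewrite subr_eq0 => /eqP ->.
Qed.
Lemma leZ r x y : ltR 0 r -> leM x y -> leM (r *: x) (r *: y).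
Proof. by move=> hr [h|->]; [left; apply: ltZ|right]. Qed.

Lemma ltRxx x : ~ ltR x x.
Proof. by case: HR => [[h _] _]. Qed.
Lemma ltR_trans x y z : ltR x y -> ltR y z -> ltR x z.
Proof. by case: HR => [[_ [h _]] _]; apply: h. Qed.
Lemma ltR_tri x y : ltR x y \/ x = y \/ ltR y x.
Proof. by case: HR => [[_ [_ h]] _]. Qed.
Lemma ltRD2r x y z : ltR x y -> ltR (x + z) (y + z).
Proof. by case: HR => [_ [h _]]; apply: h. Qed.
Lemma ltRM x y : ltR 0 x -> ltR 0 y -> ltR 0 (x * y).
Proof. by case: HR => [_ [_ [h _]]]; apply: h. Qed.
Lemma Rinv (x : R) : x != 0 -> exists y, x * y = 1 /\ y * x = 1.
Proof. by case: HR => [_ [_ [_ h]]]; apply: h. Qed.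
Lemma ltR_opp x : ltR x 0 -> ltR 0 (- x).
Proof. by move=> h; have := ltRD2r (- x) h; rewrite subrr add0r. Qed.
Lemma ltR_oppE x : ltR 0 x -> ltR (- x) 0.
Proof. by move=> h; have := ltRD2r (- x) h; rewrite subrr add0r. Qed.
Lemma ltR01 : ltR 0 1.
Proof.
case: (ltR_tri 0 1) => [//|[e|h]]; first by have := oner_neq0 R; rewrite -e eqxx.
have := ltRM (ltR_opp h) (ltR_opp h); rewrite mulrNN mulr1 => h'.
by case: (ltRxx (ltR_trans h h')).
Qed.
Lemma ltR_inv (x y : R) : ltR 0 x -> x * y = 1 -> ltR 0 y.
Proof.
move=> hx hxy; case: (ltR_tri 0 y) => [//|[e|h]].
  by move: hxy; rewrite -e mulr0 => /esym/eqP; rewrite oner_eq0.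
have := ltRM hx (ltR_opp h); rewrite mulrN hxy => h'.
have := ltRD2r 1 h'; rewrite add0r addNr => h2.
by case: (ltRxx (ltR_trans h2 ltR01)).
Qed.
Lemma ltZn r x y : ltR r 0 -> lt x y -> lt (r *: y) (r *: x).
Proof.
move=> hr h; have := ltZ (ltR_opp hr) h; rewrite !scaleNr => /lt_oppE //.
Qed.
Lemma leZn r x y : ltR r 0 -> leM x y -> leM (r *: y) (r *: x).
Proof. by move=> hr [h|->]; [left; apply: ltZn|right]. Qed.
Lemma R_inv_pos (r : R) : ltR 0 r -> exists s, ltR 0 s /\ r * s = 1 /\ s * r = 1.
Proof.
move=> hr; have : r != 0 by apply/eqP => e; subst; apply: ltRxx hr.
case/Rinv=> s [h1 h2]; exists s; split=> //; exact: ltR_inv hr h1.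
Qed.
Lemma R_sign (r : R) : ltR 0 r \/ r = 0 \/ ltR r 0.
Proof. by case: (ltR_tri 0 r) => [h|[h|h]]; [left|right;left|right;right]. Qed.

Lemma half_ex : exists h : R, ltR 0 h /\ forall p : M, h *: (p + p) = p.
Proof.
have h2 : ltR 0 (1 + 1 : R).
  have := ltRD2r 1 ltR01; rewrite add0r => h; exact: ltR_trans ltR01 h.
case: (R_inv_pos h2) => h [hp [_ hh]]; exists h; split=> // p.
by rewrite -{1 2}[p]scale1r -scalerDl scalerA hh scale1r.
Qed.
Lemma midpoint p q : lt p q -> exists t, lt p t /\ lt t q.
Proof.
move=> h; case: half_ex => c [hc hcp]; exists (c *: (p + q)); split.
  by rewrite -{1}(hcp p); apply: ltZ => //; apply: ltD2l.
by rewrite -{2}(hcp q); apply: ltZ => //; apply: ltD2r.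
Qed.

Definition bnd (N x : M) := leM (- N) x /\ leM x N.
Lemma bnd_add N N' x y : bnd N x -> bnd N' y -> bnd (N + N') (x + y).
Proof. by move=> [h1 h2] [h3 h4]; split; [rewrite opprD; apply: le_add|apply: le_add]. Qed.
Lemma bnd_mono N N' x : bnd N x -> leM N N' -> bnd N' x.
Proof. by move=> [h1 h2] h; split; [apply: le_trans (le_opp h) h1|apply: le_trans h2 h]. Qed.
Lemma neg_lt x : lt 0 x -> lt (- x) x.
Proof. by move=> h; have := lt_opp h; rewrite oppr0 => h1; apply: lt_trans h1 h. Qed.
Lemma bnd_of x : exists N, leM 0 N /\ bnd N x.
Proof.
case: (lt_tri 0 x) => [h|[<-|h]].
- exists x; split; first by left.
  by split; [left; apply: neg_lt|right].
- by exists 0; split; [right|split; right; rewrite ?oppr0].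
- have h' : lt 0 (- x) by rewrite -oppr0; apply: lt_opp.
  exists (- x); split; first by left.
  split; first by rewrite opprK; right.
  by left; move: (neg_lt h'); rewrite opprK.
Qed.
Lemma bnd_between N a b t : bnd N a -> bnd N b -> leM a t -> leM t b -> bnd N t.
Proof. by move=> [h1 _] [_ h2] h3 h4; split; [apply: le_trans h1 h3|apply: le_trans h4 h2]. Qed.
Lemma bnd0 N : leM 0 N -> bnd N 0.
Proof. by move=> h; split=> //; rewrite -oppr0; apply: le_opp. Qed.
Lemma scale_bound (r : R) N : leM 0 N -> exists N', leM 0 N' /\ forall x, bnd N x -> bnd N' (r *: x).
Proof.
move=> hN; case: (R_sign r) => [hr|[->|hr]].
- exists (r *: N); split; first by rewrite -(scaler0 _ r); apply: leZ.
  move=> x [h1 h2]; split; last by apply: leZ.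
  by rewrite -scalerN; apply: leZ.
- exists 0; split; first by right.
  by move=> x _; rewrite scale0r; apply: bnd0; right.
- exists (- r *: N); split.
    by rewrite -(scaler0 _ (- r)); apply: leZ => //; apply: ltR_opp.
  move=> x [h1 h2]; split.
    by rewrite scaleNr opprK; apply: leZn.
  by rewrite scaleNr -scalerN; apply: leZn.
Qed.
Local Notation pt := (pt M).
Definition padd n (x y : pt n) : pt n := fun i => x i + y i.
Definition psub n (x y : pt n) : pt n := fun i => x i - y i.

Lemma unlift_widen k (j : 'I_k) : unlift ord_max (widen_ord (leqnSn k) j) = Some j.
Proof.
case: unliftP => [j' e|e].
  congr Some; apply: val_inj => /=; move/(congr1 val): e => /= ->.
  by rewrite /bump leqNgt (ltn_ord j').
by move/(congr1 val): e => /= e; have := ltn_ord j; rewrite e ltnn.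
Qed.
Lemma proj_ext k (y : pt k) t : proj (ext_pt y t) = y.
Proof. by apply: functional_extensionality => j; rewrite /proj /ext_pt unlift_widen. Qed.
Lemma last_ext k (y : pt k) t : lastc (ext_pt y t) = t.
Proof. by rewrite /lastc /ext_pt unlift_none. Qed.
Lemma ext_proj k (z : pt k.+1) : ext_pt (proj z) (lastc z) = z.
Proof.
apply: functional_extensionality => i; rewrite /ext_pt /proj /lastc.
case: unliftP => [j ->|-> //].
by congr z; apply: val_inj; rewrite /= /bump leqNgt (ltn_ord j).
Qed.
Lemma pt_eq k (z z' : pt k.+1) : proj z = proj z' -> lastc z = lastc z' -> z = z'.
Proof. by move=> h1 h2; rewrite -(ext_proj z) -(ext_proj z') h1 h2. Qed.
Lemma ext_padd k (y y' : pt k) t t' : ext_pt (padd y y') (t + t') = padd (ext_pt y t) (ext_pt y' t').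
Proof.
apply: pt_eq; last by rewrite /lastc /padd /ext_pt unlift_none.
by apply: functional_extensionality => j; rewrite /padd /proj /ext_pt unlift_widen.
Qed.
Lemma padd_sub n (x y : pt n) : padd y (psub x y) = x.
Proof. by apply: functional_extensionality => i; rewrite /padd /psub addrC subrK. Qed.
Lemma pt0_eq (x y : pt 0) : x = y.
Proof. by apply: functional_extensionality => -[]. Qed.

Definition lin n (a : linmap M n) (x : pt n) : M := \sum_(i < n) lcoef a i *: x i.
Lemma leval_lin n (a : linmap M n) x : leval a x = lin a x + lconst a.
Proof. by []. Qed.
Lemma lin_add n (a : linmap M n) x y : lin a (padd x y) = lin a x + lin a y.
Proof. by rewrite /lin -big_split /=; apply: eq_bigr => i _; rewrite scalerDr. Qed.
Lemma leval_add n (a : linmap M n) x y : leval a (padd x y) = lin a x + leval a y.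
Proof. by rewrite !leval_lin lin_add addrA. Qed.

Definition aff n (f : pt n -> M) := exists a : linmap M n, forall x, f x = leval a x.
Lemma aff_leval n (a : linmap M n) : aff (leval a).
Proof. by exists a. Qed.
Lemma aff_lin n (a : linmap M n) : aff (lin a).
Proof. by exists (LinMap (lcoef a) 0) => x; rewrite leval_lin addr0. Qed.
Lemma aff_const n c : aff (fun _ : pt n => c).
Proof.
exists (LinMap (fun _ => 0) c) => x; rewrite leval_lin /lin /= big1 ?add0r //.
by move=> i _; rewrite scale0r.
Qed.
Lemma aff_coord n (i : 'I_n) : aff (fun x : pt n => x i).
Proof.
exists (LinMap (fun j => if j == i then 1 else 0) 0) => x; rewrite leval_lin /lin /= addr0.
rewrite (bigD1 i) //= eqxx scale1r big1 ?addr0 // => j /negbTE ->.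
by rewrite scale0r.
Qed.
Lemma aff_add n (f g : pt n -> M) : aff f -> aff g -> aff (fun x => f x + g x).
Proof.
case=> a ha [b hb]; exists (LinMap (fun i => lcoef a i + lcoef b i) (lconst a + lconst b)) => x.
rewrite ha hb !leval_lin /lin /=.
under [X in _ = X + _]eq_bigr do rewrite scalerDl.
by rewrite big_split /= addrACA.
Qed.
Lemma aff_scale n (r : R) (f : pt n -> M) : aff f -> aff (fun x => r *: f x).
Proof.
case=> a ha; exists (LinMap (fun i => r * lcoef a i) (r *: lconst a)) => x.
rewrite ha !leval_lin /lin /= scalerDr scaler_sumr; congr (_ + _).
by apply: eq_bigr => i _; rewrite scalerA.
Qed.
Lemma aff_ext n (f g : pt n -> M) : aff f -> (forall x, f x = g x) -> aff g.
Proof. by move=> h e; have <- : f = g by apply: functional_extensionality. Qed.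
Lemma aff_opp n (f : pt n -> M) : aff f -> aff (fun x => - f x).
Proof. by move=> h; apply: (aff_ext (aff_scale (-1) h)) => x; rewrite scaleN1r. Qed.
Lemma aff_sub n (f g : pt n -> M) : aff f -> aff g -> aff (fun x => f x - g x).
Proof. by move=> hf hg; apply: aff_add => //; apply: aff_opp. Qed.
Lemma aff_sum n m (G : 'I_m -> pt n -> M) : (forall i, aff (G i)) -> aff (fun x => \sum_(i < m) G i x).
Proof.
elim: m G => [|m IH] G hG.
  by apply: (aff_ext (aff_const _ 0)) => x; rewrite big_ord0.
apply: (aff_ext (aff_add (IH (fun i => G (widen_ord (leqnSn m) i)) _) (hG ord_max))) => //.
by move=> x; rewrite big_ord_recr.
Qed.
Lemma aff_comp n m (f : pt m -> M) (F : pt n -> pt m) :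
  aff f -> (forall i, aff (fun x => F x i)) -> aff (fun x => f (F x)).
Proof.
case=> a ha hF.
have h1 : aff (fun x => \sum_(i < m) (fun i x => lcoef a i *: F x i) i x).
  by apply: aff_sum => i; apply: aff_scale.
have h2 := aff_add h1 (aff_const n (lconst a)).
by apply: (aff_ext h2) => x /=; rewrite ha leval_lin.
Qed.
Lemma aff_proj k (f : pt k -> M) : aff f -> aff (fun z : pt k.+1 => f (proj z)).
Proof. by move=> h; apply: aff_comp h _ => i; apply: aff_coord. Qed.
Lemma aff_last k : aff (fun z : pt k.+1 => lastc z).
Proof. exact: aff_coord. Qed.
Lemma aff_extpt n k (f : pt k.+1 -> M) (F : pt n -> pt k) (h : pt n -> M) :
  aff f -> (forall i, aff (fun x => F x i)) -> aff h -> aff (fun x => f (ext_pt (F x) (h x))).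
Proof.
move=> hf hF hh; apply: aff_comp hf _ => i; rewrite /ext_pt.
by case: (unlift ord_max i) => [j|] //; apply: hF.
Qed.
Lemma aff_split k (f : pt k.+1 -> M) : aff f ->
  exists f1 : pt k -> M, exists rho : R, aff f1 /\ forall z, f z = f1 (proj z) + rho *: lastc z.
Proof.
case=> a ha; exists (leval (LinMap (fun j => lcoef a (widen_ord (leqnSn k) j)) (lconst a))).
exists (lcoef a ord_max); split; first exact: aff_leval.
move=> z; rewrite ha !leval_lin /lin big_ord_recr /=.
by rewrite addrAC.
Qed.
Lemma aff0_const (f : pt 0 -> M) x y : aff f -> f x = f y.
Proof. by move=> _; rewrite (pt0_eq x y). Qed.
Variable e0 : M.
Hypothesis He0 : lt 0 e0.

Lemma set_eq n (A B : pt n -> Prop) : (forall x, A x <-> B x) -> A = B.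
Proof. by move=> h; apply: functional_extensionality => x; apply: propositional_extensionality. Qed.

Lemma lt_addpos x : lt x (x + e0).
Proof. by have := ltD2l x He0; rewrite addr0. Qed.
Lemma lt_subpos x : lt (x - e0) x.
Proof. by have := ltD2r (x - e0) He0; rewrite add0r addrCA subrr addr0. Qed.

Lemma fiber_ne (a b : extM M) : ext_lt lt a b -> exists t, ext_lt lt a (MFin t) /\ ext_lt lt (MFin t) b.
Proof.
case: a => [|p|]; case: b => [|q|] //= h.
- by exists (q - e0); split=> //; apply: lt_subpos.
- exact: midpoint.
- by exists (p + e0); split=> //; apply: lt_addpos.
Qed.

Lemma cell_ne n (C : pt n -> Prop) : linear_cell lt C -> exists x, C x.
Proof.
elim=> {n C} [C hC|k X a C _ [y hy] hC|k X a b C _ [y hy] hab hC].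
- by exists (fun i => 0).
- by exists (ext_pt y (leval a y)); apply/hC; rewrite proj_ext last_ext.
- case: (fiber_ne (hab _ hy)) => t [h1 h2].
  by exists (ext_pt y t); apply/hC; rewrite proj_ext last_ext.
Qed.

Definition fib k (X : pt k -> Prop) (F : pt k -> M -> Prop) : pt k.+1 -> Prop :=
  fun z => X (proj z) /\ F (proj z) (lastc z).

Lemma fib_ext k X F (y : pt k) t : fib X F (ext_pt y t) <-> X y /\ F y t.
Proof. by rewrite /fib proj_ext last_ext. Qed.

Lemma proj_fib k (X : pt k -> Prop) F : (forall y, X y -> exists t, F y t) -> proj_set (fib X F) = X.
Proof.
move=> h; apply: set_eq => y; split.
  case=> z [[hz _] e]; have <- // : proj z = y by apply: functional_extensionality.
move=> hy; case: (h y hy) => t ht; exists (ext_pt y t); split; first by apply/fib_ext.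
by move=> j; rewrite proj_ext.
Qed.

Lemma cell_graph k (X : pt k -> Prop) phi : linear_cell lt X -> aff phi ->
  linear_cell lt (fib X (fun y t => t = phi y)).
Proof.
move=> hX [a ha]; apply: (lc_graph (a := a) hX) => z.
by rewrite /fib ha.
Qed.

Lemma cell_cyl k (X : pt k -> Prop) (a b : extmap M k) : linear_cell lt X ->
  (forall y, X y -> ext_lt lt (eeval a y) (eeval b y)) ->
  linear_cell lt (fib X (fun y t => ext_lt lt (eeval a y) (MFin t) /\ ext_lt lt (MFin t) (eeval b y))).
Proof. by move=> hX hab; apply: (lc_cyl hX hab). Qed.

Lemma cell_cyl_ff k (X : pt k -> Prop) f g : linear_cell lt X -> aff f -> aff g ->
  (forall y, X y -> lt (f y) (g y)) ->
  linear_cell lt (fib X (fun y t => lt (f y) t /\ lt t (g y))).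
Proof.
move=> hX [a ha] [b hb] h.
have := @cell_cyl k X (Fin a) (Fin b) hX; rewrite /=.
have -> : (fun y t => lt (f y) t /\ lt t (g y)) = (fun y t => lt (leval a y) t /\ lt t (leval b y)).
  by apply: functional_extensionality => y; apply: functional_extensionality => t; rewrite ha hb.
by apply=> y hy; rewrite -ha -hb; apply: h.
Qed.

Lemma cell_cyl_fi k (X : pt k -> Prop) f : linear_cell lt X -> aff f ->
  linear_cell lt (fib X (fun y t => lt (f y) t)).
Proof.
move=> hX [a ha].
have := @cell_cyl k X (Fin a) (@PosInf _ M k) hX; rewrite /=.
have -> : (fun y t => lt (f y) t) = (fun y t => lt (leval a y) t /\ True).
  apply: functional_extensionality => y; apply: functional_extensionality => t; rewrite ha.
  by apply: propositional_extensionality; split=> [h|[]].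
by apply.
Qed.

Lemma cell_cyl_if k (X : pt k -> Prop) f : linear_cell lt X -> aff f ->
  linear_cell lt (fib X (fun y t => lt t (f y))).
Proof.
move=> hX [a ha].
have := @cell_cyl k X (@NegInf _ M k) (Fin a) hX; rewrite /=.
have -> : (fun y t => lt t (f y)) = (fun y t => True /\ lt t (leval a y)).
  apply: functional_extensionality => y; apply: functional_extensionality => t; rewrite ha.
  by apply: propositional_extensionality; split=> [h|[]].
by apply.
Qed.

Lemma cell_cyl_ii k (X : pt k -> Prop) : linear_cell lt X ->
  linear_cell lt (fib X (fun y t => True)).
Proof.
move=> hX.
have := @cell_cyl k X (@NegInf _ M k) (@PosInf _ M k) hX; rewrite /=.
have -> : (fun (y : pt k) (t : M) => True) = (fun y t => True /\ True).
  apply: functional_extensionality => y; apply: functional_extensionality => t.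
  by apply: propositional_extensionality.
by apply.
Qed.

Lemma pu_graph k (X : pt k -> Prop) phi : purely_unbounded lt X ->
  purely_unbounded lt (fib X (fun y t => t = phi y)).
Proof.
move=> hX /=; left; split.
  move=> z z' [_ h] [_ h'] e; rewrite h h'.
  by have -> : proj z = proj z' by apply: functional_extensionality.
by rewrite proj_fib // => y _; exists (phi y).
Qed.

Lemma pu_fib k (X : pt k -> Prop) F : purely_unbounded lt X ->
  (forall y, X y -> exists t, F y t) ->
  (forall N, leM 0 N -> exists y, X y /\ exists t1 t2, F y t1 /\ F y t2 /\ lt (t1 + N) t2) ->
  purely_unbounded lt (fib X F).
Proof.
move=> hX hne hbig /=; rewrite proj_fib //.
case: (classic (is_graph_set (fib X F))) => hg; [left|right]; split=> //.
split=> // N hN; case: (hbig N hN) => y [hy [t1 [t2 [h1 [h2 h3]]]]].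
exists (ext_pt y t1); split; first by apply/fib_ext.
exists t2; rewrite proj_ext; split; first by apply/fib_ext.
rewrite last_ext => -[_ h]; exact: le_lt_false h h3.
Qed.
Lemma R_inv_neg (r : R) : ltR r 0 -> exists s, ltR s 0 /\ r * s = 1 /\ s * r = 1.
Proof.
move=> hr; case: (R_inv_pos (ltR_opp hr)) => s [hs [h1 h2]].
exists (- s); split; first exact: ltR_oppE.
by rewrite mulrN -mulNr h1 mulNr -mulrN h2.
Qed.
Lemma R_inv_ne (r : R) : r <> 0 -> exists s, r * s = 1 /\ s * r = 1.
Proof. by move=> h; apply: Rinv; apply/eqP. Qed.
Lemma scaleK (r s : R) (u : M) : s * r = 1 -> s *: (r *: u) = u.
Proof. by move=> h; rewrite scalerA h scale1r. Qed.

Lemma ext_lt_trans (a b c : extM M) : ext_lt lt a b -> ext_lt lt b c -> ext_lt lt a c.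
Proof.
case: a => [|p|]; case: b => [|q|]; case: c => [|r|] //=.
exact: lt_trans.
Qed.

Lemma pu_proj k (C : pt k.+1 -> Prop) : purely_unbounded lt C -> purely_unbounded lt (proj_set C).
Proof. by case=> [[]|[_ []]]. Qed.

Lemma fib_graph_eq k (X : pt k -> Prop) (a : linmap M k) (C : pt k.+1 -> Prop) :
  (forall x, C x <-> X (proj x) /\ lastc x = leval a (proj x)) ->
  C = fib X (fun y t => t = leval a y).
Proof. by move=> h; apply: set_eq. Qed.
Lemma fib_cyl_eq k (X : pt k -> Prop) (a b : extmap M k) (C : pt k.+1 -> Prop) :
  (forall x, C x <-> X (proj x) /\ ext_lt lt (eeval a (proj x)) (MFin (lastc x))
                                    /\ ext_lt lt (MFin (lastc x)) (eeval b (proj x))) ->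
  C = fib X (fun y t => ext_lt lt (eeval a y) (MFin t) /\ ext_lt lt (MFin t) (eeval b y)).
Proof. by move=> h; apply: set_eq. Qed.

Lemma bnd_sub N u v : bnd N u -> bnd N v -> bnd (N + N) (u - v).
Proof.
move=> hu [h1 h2]; apply: bnd_add hu _; split; first exact: le_opp h2.
by have := le_opp h1; rewrite opprK.
Qed.
Lemma bnd_near N u v : bnd N (u - v) -> leM (v - N) u /\ leM u (v + N).
Proof.
case=> h1 h2; split.
  by have := le_add (le_refl v) h1; rewrite addrCA subrr addr0.
by have := le_add (le_refl v) h2; rewrite addrCA subrr addr0 addrC.
Qed.

Lemma rigid n (J : pt n -> Prop) : linear_cell lt J -> forall f, aff f ->
  purely_unbounded lt J -> (exists N, leM 0 N /\ forall x, J x -> bnd N (f x)) ->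
  forall x y, J x -> J y -> f x = f y.
Proof.
elim=> {n J} [C hC|k X a C hX IH hC|k X a b C hX IH hab hC] f hf.
- by move=> _ _ x y _ _; apply: aff0_const.
- move: (fib_graph_eq hC) => ? {hC}; subst C => hpu [N [hN hb]].
  case: (aff_split hf) => f1 [rho [hf1 ef]].
  have hpX : purely_unbounded lt X.
    by move: (pu_proj hpu); rewrite proj_fib // => y _; exists (leval a y).
  have hf' : aff (fun y => f1 y + rho *: leval a y).
    by apply: aff_add hf1 (aff_scale _ (aff_leval a)).
  have key := IH _ hf' hpX.
  have e : forall z, fib X (fun y t => t = leval a y) z -> f z = f1 (proj z) + rho *: leval a (proj z).
    by move=> z [_ hz]; rewrite ef hz.
  move=> x y hx hy; rewrite (e _ hx) (e _ hy); apply: key; [|by case: hx|by case: hy].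
  exists N; split=> // w hw; have hz : fib X (fun y t => t = leval a y) (ext_pt w (leval a w)).
    by apply/fib_ext.
  by have := hb _ hz; rewrite (e _ hz) proj_ext.
- move: (fib_cyl_eq hC) => ? {hC}; subst C => hpu [N [hN hb]].
  case: (aff_split hf) => f1 [rho [hf1 ef]].
  set F := (fun y t => ext_lt lt (eeval a y) (MFin t) /\ ext_lt lt (MFin t) (eeval b y)) in hpu hb *.
  have hne : forall y, X y -> exists t, F y t by move=> y hy; apply: fiber_ne; apply: hab.
  have hpX : purely_unbounded lt X by move: (pu_proj hpu); rewrite proj_fib.
  have rho0 : rho = 0.
    apply: NNPP => hr; case: (R_inv_ne hr) => s [_ hs].
    move: hpu => /= [[hg _]|[_ [_ hbig]]].
      case: (cell_ne hX) => y hy; case: (hne y hy) => t1 [h1 h2].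
      case: (fiber_ne h2) => t2 [h3 h4].
      have m1 : fib X F (ext_pt y t1) by apply/fib_ext.
      have m2 : fib X F (ext_pt y t2).
        by apply/fib_ext; split=> //; split=> //; apply: ext_lt_trans h1 h3.
      have := hg _ _ m1 m2; rewrite !last_ext !proj_ext => /(_ (fun j => erefl)) ee.
      by subst; apply: (ltxx h3).
    have hNN : leM 0 (N + N) by rewrite -(addr0 0); apply: le_add.
    case: (scale_bound s hNN) => N' [hN' hsc].
    case: (hbig N' hN') => x [hx [t [ht hnot]]]; apply: hnot.
    have hx' : fib X F (ext_pt (proj x) (lastc x)) by rewrite ext_proj.
    have := bnd_sub (hb _ ht) (hb _ hx'); rewrite !ef !proj_ext !last_ext.
    rewrite opprD addrACA subrr add0r -scalerBr => /hsc; rewrite scaleK // => /bnd_near.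
    by [].
  have e : forall z, f z = f1 (proj z) by move=> z; rewrite ef rho0 scale0r addr0.
  move=> x y hx hy; rewrite !e; apply: IH => //; [|by case: hx|by case: hy].
  exists N; split=> // w hw; case: (hne w hw) => t ht.
  have hz : fib X F (ext_pt w t) by apply/fib_ext.
  by have := hb _ hz; rewrite e proj_ext.
Qed.
Lemma open_lower n (C : pt n -> Prop) : linear_cell lt C -> forall f, aff f ->
  forall x, C x -> (exists y, C y /\ f y <> f x) -> exists y, C y /\ lt (f y) (f x).
Proof.
elim=> {n C} [C hC|k X a C hX IH hC|k X a b C hX IH hab hC] f hf.
- by move=> x _ [y [_ h]]; case: h; apply: aff0_const.
- move: (fib_graph_eq hC) => ? {hC}; subst C.
  case: (aff_split hf) => f1 [rho [hf1 ef]].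
  have hf' : aff (fun y => f1 y + rho *: leval a y).
    by apply: aff_add hf1 (aff_scale _ (aff_leval a)).
  have e : forall z, fib X (fun y t => t = leval a y) z -> f z = f1 (proj z) + rho *: leval a (proj z).
    by move=> z [_ hz]; rewrite ef hz.
  move=> x hx [y [hy ne]].
  case: (IH _ hf' (proj x) (proj1 hx)).
    by exists (proj y); split; [case: hy|rewrite -(e _ hx) -(e _ hy)].
  move=> w [hw lw]; exists (ext_pt w (leval a w)).
  have hz : fib X (fun y t => t = leval a y) (ext_pt w (leval a w)) by apply/fib_ext.
  by split=> //; rewrite (e _ hz) (e _ hx) proj_ext.
- move: (fib_cyl_eq hC) => ? {hC}; subst C.
  case: (aff_split hf) => f1 [rho [hf1 ef]].
  set F := (fun y t => ext_lt lt (eeval a y) (MFin t) /\ ext_lt lt (MFin t) (eeval b y)).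
  have hne : forall y, X y -> exists t, F y t by move=> y hy; apply: fiber_ne; apply: hab.
  move=> x [hx [h1 h2]] [y [hy ne]].
  case: (R_sign rho) => [hr|[hr|hr]].
  + case: (fiber_ne h1) => t [h3 h4]; exists (ext_pt (proj x) t); split.
      by apply/fib_ext; split=> //; split=> //; apply: ext_lt_trans h4 h2.
    by rewrite !ef proj_ext last_ext; apply: ltD2l; apply: ltZ.
  + have e : forall z, f z = f1 (proj z) by move=> z; rewrite ef hr scale0r addr0.
    case: (IH _ hf1 _ hx).
      by exists (proj y); split; [case: hy|rewrite -!e].
    move=> w [hw lw]; case: (hne w hw) => t ht; exists (ext_pt w t); split.
      by apply/fib_ext.
    by rewrite !e proj_ext.
  + case: (fiber_ne h2) => t [h3 h4]; exists (ext_pt (proj x) t); split.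
      by apply/fib_ext; split=> //; split=> //; apply: ext_lt_trans h1 h3.
    by rewrite !ef proj_ext last_ext; apply: ltD2l; apply: ltZn.
Qed.

Lemma open_upper n (C : pt n -> Prop) : linear_cell lt C -> forall f, aff f ->
  forall x, C x -> (exists y, C y /\ f y <> f x) -> exists y, C y /\ lt (f x) (f y).
Proof.
move=> hC f hf x hx [y [hy ne]].
case: (open_lower hC (aff_opp hf) hx).
  by exists y; split=> // e; apply: ne; rewrite -[f y]opprK e opprK.
by move=> w [hw h]; exists w; split=> //; apply: lt_oppE.
Qed.
Definition ub n (C : pt n -> Prop) (f : pt n -> M) K := forall x, C x -> leM (f x) K.

Lemma lt_sub_add (c K v : M) : lt (K - c) v -> lt K (c + v).
Proof. by move=> h; have := ltD2l c h; rewrite addrCA subrr addr0. Qed.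

Lemma lt_add_sub (c K v : M) : lt K (c + v) -> lt (K - c) v.
Proof. by move=> h; have := ltD2r (- c) h; rewrite addrAC subrr add0r. Qed.
Lemma lt_add_sub2 (c K v : M) : lt (c + v) K -> lt v (K - c).
Proof. by move=> h; have := ltD2r (- c) h; rewrite addrAC subrr add0r. Qed.

Lemma exceed_pos (rho : R) c K t0 : ltR 0 rho -> exists t, lt t0 t /\ lt K (c + rho *: t).
Proof.
move=> hr; case: (R_inv_pos hr) => s [hs [h1 h2]]; set u := s *: (K - c).
have key : forall t, lt u t -> lt K (c + rho *: t).
  by move=> t ht; apply: lt_sub_add; have := ltZ hr ht; rewrite /u scaleK.
case: (lt_tri t0 u) => [h|[h|h]].
- by exists (u + e0); split; [apply: lt_trans h (lt_addpos _)|apply: key; apply: lt_addpos].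
- by exists (u + e0); subst; split; [apply: lt_addpos|apply: key; apply: lt_addpos].
- by exists (t0 + e0); split; [apply: lt_addpos|apply: key; apply: lt_trans h (lt_addpos _)].
Qed.
Lemma exceed_neg (rho : R) c K t0 : ltR rho 0 -> exists t, lt t t0 /\ lt K (c + rho *: t).
Proof.
move=> hr; case: (R_inv_neg hr) => s [hs [h1 h2]]; set u := s *: (K - c).
have key : forall t, lt t u -> lt K (c + rho *: t).
  by move=> t ht; apply: lt_sub_add; have := ltZn hr ht; rewrite /u scaleK.
case: (lt_tri t0 u) => [h|[h|h]].
- by exists (t0 - e0); split; [apply: lt_subpos|apply: key; apply: lt_trans (lt_subpos _) h].
- by exists (u - e0); subst; split; [apply: lt_subpos|apply: key; apply: lt_subpos].
- by exists (u - e0); split; [apply: lt_trans (lt_subpos _) h|apply: key; apply: lt_subpos].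
Qed.

Lemma key_pos (rho : R) (a : extM M) t1 beta c K : ltR 0 rho -> ext_lt lt a (MFin t1) -> lt t1 beta ->
  lt K (c + rho *: beta) -> exists t, ext_lt lt a (MFin t) /\ lt t beta /\ lt K (c + rho *: t).
Proof.
move=> hr h1 h2 h3; case: (R_inv_pos hr) => s [hs [e1 e2]]; set u := s *: (K - c).
have key : forall t, lt u t -> lt K (c + rho *: t).
  by move=> t ht; apply: lt_sub_add; have := ltZ hr ht; rewrite /u scaleK.
have hub : lt u beta.
  by have := ltZ hs (lt_add_sub h3); rewrite scaleK.
case: (classic (lt u t1)) => hu; first by exists t1; split=> //; split=> //; apply: key.
case: (fiber_ne (a := MFin u) (b := MFin beta) hub) => t [ht1 ht2].
exists t; split; last by split=> //; apply: key.
apply: ext_lt_trans h1 _ => /=; apply: le_lt_trans (not_lt hu) ht1.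
Qed.
Lemma key_neg (rho : R) (b : extM M) t1 alpha c K : ltR rho 0 -> lt alpha t1 -> ext_lt lt (MFin t1) b ->
  lt K (c + rho *: alpha) -> exists t, lt alpha t /\ ext_lt lt (MFin t) b /\ lt K (c + rho *: t).
Proof.
move=> hr h1 h2 h3; case: (R_inv_neg hr) => s [hs [e1 e2]]; set u := s *: (K - c).
have key : forall t, lt t u -> lt K (c + rho *: t).
  by move=> t ht; apply: lt_sub_add; have := ltZn hr ht; rewrite /u scaleK.
have hub : lt alpha u.
  by have := ltZn hs (lt_add_sub h3); rewrite scaleK.
case: (classic (lt t1 u)) => hu; first by exists t1; split=> //; split=> //; apply: key.
case: (fiber_ne (a := MFin alpha) (b := MFin u) hub) => t [ht1 ht2].
exists t; split=> //; split; last by apply: key.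
apply: ext_lt_trans h2 => /=; apply: lt_le_trans ht2 (not_lt hu).
Qed.

Lemma ext_lt_neg (a : extM M) : ext_lt lt a (@MNeg R M) -> False.
Proof. by case: a. Qed.
Lemma ext_lt_pos (a : extM M) : ext_lt lt (@MPos R M) a -> False.
Proof. by case: a. Qed.

Lemma sup_ex n (C : pt n -> Prop) : linear_cell lt C -> forall f, aff f ->
  (exists K, ub C f K) -> exists m, ub C f m /\ forall K, ub C f K -> leM m K.
Proof.
elim=> {n C} [C hC|k X a C hX IH hC|k X a b C hX IH hab hC] f hf.
- move=> _; exists (f (fun _ => 0)); split; last by move=> K; apply.
  by move=> x _; rewrite (pt0_eq x (fun _ => 0)); right.
- move: (fib_graph_eq hC) => ? {hC}; subst C.
  case: (aff_split hf) => f1 [rho [hf1 ef]].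
  have hf' : aff (fun y => f1 y + rho *: leval a y).
    by apply: aff_add hf1 (aff_scale _ (aff_leval a)).
  have e : forall z, fib X (fun y t => t = leval a y) z -> f z = f1 (proj z) + rho *: leval a (proj z).
    by move=> z [_ hz]; rewrite ef hz.
  have eq : forall K, ub (fib X (fun y t => t = leval a y)) f K <-> ub X (fun y => f1 y + rho *: leval a y) K.
    move=> K; split=> h w hw.
      have hz : fib X (fun y t => t = leval a y) (ext_pt w (leval a w)) by apply/fib_ext.
      by have := h _ hz; rewrite (e _ hz) proj_ext.
    by rewrite (e _ hw); apply: h; case: hw.
  case=> K /eq hK; case: (IH _ hf' (ex_intro _ K hK)) => m [h1 h2].
  by exists m; split; [apply/eq|move=> K' /eq; apply: h2].
- move: (fib_cyl_eq hC) => ? {hC}; subst C.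
  case: (aff_split hf) => f1 [rho [hf1 ef]].
  case: (cell_ne hX) => y0 hy0.
  case=> K hK; case: (R_sign rho) => [hr|[hr|hr]].
  + move: hab hK; case: b => [|beta|] hab hK.
    * by case: (ext_lt_neg (hab _ hy0)).
    * set F := (fun y t => ext_lt lt (eeval a y) (MFin t) /\ ext_lt lt (MFin t) (eeval (Fin beta) y)) in hK *.
      have hne : forall y, X y -> exists t, F y t by move=> y hy; apply: fiber_ne; apply: hab.
      set g := (fun y => f1 y + rho *: leval beta y).
      have hg : aff g by apply: aff_add hf1 (aff_scale _ (aff_leval beta)).
      have eq : forall K, ub (fib X F) f K <-> ub X g K.
        move=> K'; split=> h w hw.
          apply: not_lt => hlt; case: (hne w hw) => t1 [ht1 ht2].
          case: (key_pos hr ht1 ht2 hlt) => t [h3 [h4 h5]].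
          have hz : fib X F (ext_pt w t) by apply/fib_ext.
          by have := h _ hz; rewrite ef proj_ext last_ext => /le_lt_false; apply.
        case: hw => hw [_ hb]; apply: le_trans (h _ hw); left.
        by rewrite ef /g; apply: ltD2l; apply: ltZ.
      case: (IH _ hg (ex_intro _ K (proj1 (eq K) hK))) => m [h1 h2].
      by exists m; split; [apply/eq|move=> K' /eq; apply: h2].
    * set F := (fun y t => ext_lt lt (eeval a y) (MFin t) /\ ext_lt lt (MFin t) (eeval (@PosInf _ M k) y)) in hK *.
      have hne : forall y, X y -> exists t, F y t by move=> y hy; apply: fiber_ne; apply: hab.
      case: (hne y0 hy0) => t0 [ht0 _].
      case: (exceed_pos (f1 y0) K t0 hr) => t [h1 h2].
      have hz : fib X F (ext_pt y0 t).
        by apply/fib_ext; split=> //; split=> //; apply: ext_lt_trans ht0 _.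
      by have := hK _ hz; rewrite ef proj_ext last_ext => /le_lt_false; case.
  + set F := (fun y t => ext_lt lt (eeval a y) (MFin t) /\ ext_lt lt (MFin t) (eeval b y)) in hK *.
    have hne : forall y, X y -> exists t, F y t by move=> y hy; apply: fiber_ne; apply: hab.
    have e : forall z, f z = f1 (proj z) by move=> z; rewrite ef hr scale0r addr0.
    have eq : forall K, ub (fib X F) f K <-> ub X f1 K.
      move=> K'; split=> h w hw.
        case: (hne w hw) => t ht; have hz : fib X F (ext_pt w t) by apply/fib_ext.
        by have := h _ hz; rewrite e proj_ext.
      by rewrite e; apply: h; case: hw.
    case: (IH _ hf1 (ex_intro _ K (proj1 (eq K) hK))) => m [h1 h2].
    by exists m; split; [apply/eq|move=> K' /eq; apply: h2].
  + move: hab hK; case: a => [|alpha|] hab hK.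
    * set F := (fun y t => ext_lt lt (eeval (@NegInf _ M k) y) (MFin t) /\ ext_lt lt (MFin t) (eeval b y)) in hK *.
      have hne : forall y, X y -> exists t, F y t by move=> y hy; apply: fiber_ne; apply: hab.
      case: (hne y0 hy0) => t0 [_ ht0].
      case: (exceed_neg (f1 y0) K t0 hr) => t [h1 h2].
      have hz : fib X F (ext_pt y0 t).
        by apply/fib_ext; split=> //; split=> //; apply: ext_lt_trans ht0.
      by have := hK _ hz; rewrite ef proj_ext last_ext => /le_lt_false; case.
    * set F := (fun y t => ext_lt lt (eeval (Fin alpha) y) (MFin t) /\ ext_lt lt (MFin t) (eeval b y)) in hK *.
      have hne : forall y, X y -> exists t, F y t by move=> y hy; apply: fiber_ne; apply: hab.
      set g := (fun y => f1 y + rho *: leval alpha y).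
      have hg : aff g by apply: aff_add hf1 (aff_scale _ (aff_leval alpha)).
      have eq : forall K, ub (fib X F) f K <-> ub X g K.
        move=> K'; split=> h w hw.
          apply: not_lt => hlt; case: (hne w hw) => t1 [ht1 ht2].
          case: (key_neg hr ht1 ht2 hlt) => t [h3 [h4 h5]].
          have hz : fib X F (ext_pt w t) by apply/fib_ext.
          by have := h _ hz; rewrite ef proj_ext last_ext => /le_lt_false; apply.
        case: hw => hw [ha _]; apply: le_trans (h _ hw); left.
        by rewrite ef /g; apply: ltD2l; apply: ltZn.
      case: (IH _ hg (ex_intro _ K (proj1 (eq K) hK))) => m [h1 h2].
      by exists m; split; [apply/eq|move=> K' /eq; apply: h2].
    * by case: (ext_lt_pos (hab _ hy0)).
Qed.
Definition sdata n (S J D : pt n -> Prop) (P : pt n -> pt n) :=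
  linear_cell lt J /\ purely_unbounded lt J /\ linear_cell lt D /\ bounded_set lt D /\
   (forall i, aff (fun x => P x i)) /\
   (forall x, S x -> J (P x) /\ D (psub x (P x))) /\
   (forall g d, J g -> D d -> S (padd g d)) /\
   (forall g g' d d', J g -> J g' -> D d -> D d' -> padd g d = padd g' d' -> g = g' /\ d = d').
Definition sprod n (S : pt n -> Prop) := linear_cell lt S /\ exists J D P, @sdata n S J D P.

Lemma sprod_pc n (S : pt n -> Prop) : sprod S -> product_cell lt S.
Proof.
case=> hS [J [D [P [hJ [hpJ [hD [hbD [_ [h1 [h2 h3]]]]]]]]]]; split=> //.
exists J, D; split=> //; split=> //; split=> //; split=> //; split.
  move=> c; split.
    move=> hc; case: (h1 _ hc) => hg hd; exists (P c), (psub c (P c)); split=> //; split=> //.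
    by move=> i; rewrite /psub addrC subrK.
  case=> g [d [hg [hd e]]].
  have -> : c = padd g d by apply: functional_extensionality.
  by apply: h2.
move=> g g' d d' hg hg' hd hd' e.
have := h3 _ _ _ _ hg hg' hd hd' (functional_extensionality _ _ e).
by case=> -> ->.
Qed.

Lemma sdata_P n (S J D : pt n -> Prop) P g d : sdata S J D P -> J g -> D d ->
  P (padd g d) = g /\ psub (padd g d) (P (padd g d)) = d.
Proof.
case=> _ [_ [_ [_ [_ [h1 [h2 h3]]]]]] hg hd; have hs := h2 _ _ hg hd; case: (h1 _ hs) => hj hd'.
by apply: (h3 _ _ _ _ hj hg hd' hd); rewrite padd_sub.
Qed.

Lemma psub_ext k (z : pt k.+1) y t : psub z (ext_pt y t) = ext_pt (psub (proj z) y) (lastc z - t).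
Proof.
apply: pt_eq; last by rewrite last_ext /lastc /psub /ext_pt unlift_none.
by rewrite proj_ext; apply: functional_extensionality => j; rewrite /psub /proj /ext_pt unlift_widen.
Qed.

Lemma coord_ext k (z : pt k.+1) i : z i = match unlift ord_max i with Some j => proj z j | None => lastc z end.
Proof. by rewrite -{1}(ext_proj z). Qed.

Lemma GB k (Y J D : pt k -> Prop) (P : pt k -> pt k) (S : pt k.+1 -> Prop)
  (FJ FD : pt k -> M -> Prop) (tau : pt k.+1 -> M) :
  sdata Y J D P -> linear_cell lt S ->
  linear_cell lt (fib J FJ) -> purely_unbounded lt (fib J FJ) ->
  linear_cell lt (fib D FD) -> (exists N, leM 0 N /\ forall d s, D d -> FD d s -> bnd N s) ->
  aff tau ->
  (forall z, S z -> Y (proj z) /\ FJ (P (proj z)) (tau z) /\ FD (psub (proj z) (P (proj z))) (lastc z - tau z)) ->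
  (forall g d t s, J g -> D d -> FJ g t -> FD d s -> S (ext_pt (padd g d) (t + s))) ->
  ((forall g t t', J g -> FJ g t -> FJ g t' -> t = t') \/ (forall d s s', D d -> FD d s -> FD d s' -> s = s')) ->
  sprod S.
Proof.
move=> hY hS hJ' hpJ' hD' [N2 [hN2 hb2]] htau hcov hsum hfun.
case: (hY) => hJ [hpJ [hD [[N1 [hN1 hb1]] [hP [h1 [h2 h3]]]]]].
split=> //; exists (fib J FJ), (fib D FD), (fun z => ext_pt (P (proj z)) (tau z)).
split; first exact: hJ'. split; first exact: hpJ'. split; first exact: hD'.
split; [|split; [|split; [|split]]].
- exists (N1 + N2); split; first by rewrite -(addr0 0); apply: le_add.
  move=> z [hz hf] i; rewrite coord_ext; case: (unlift ord_max i) => [j|].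
    apply: (bnd_mono (hb1 _ hz j)); rewrite -{1}(addr0 N1); apply: le_add => //; apply: le_refl.
  apply: (bnd_mono (hb2 _ _ hz hf)); rewrite -{1}(add0r N2); apply: le_add => //; apply: le_refl.
- move=> i; rewrite /ext_pt; case: (unlift ord_max i) => [j|] //.
  by apply: aff_proj (hP j).
- move=> z hz; case: (hcov _ hz) => hy [hfj hfd]; case: (h1 _ hy) => hj hd.
  split; first by apply/fib_ext.
  by rewrite psub_ext; apply/fib_ext.
- move=> g d [hg hfg] [hd hfd].
  have -> : padd g d = ext_pt (padd (proj g) (proj d)) (lastc g + lastc d).
    by rewrite ext_padd !ext_proj.
  exact: hsum.
- move=> g g' d d' [hg hfg] [hg' hfg'] [hd hfd] [hd' hfd'] e.
  have ep : padd (proj g) (proj d) = padd (proj g') (proj d') by move: (congr1 (@proj _ _ k) e).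
  have el : lastc g + lastc d = lastc g' + lastc d' by move: (congr1 (@lastc _ _ k) e).
  case: (h3 _ _ _ _ hg hg' hd hd' ep) => eg ed.
  rewrite -eg in hfg'; rewrite -ed in hfd'.
  have [lg ld] : lastc g = lastc g' /\ lastc d = lastc d'.
    case: hfun => hf.
      have lg := hf _ _ _ hg hfg hfg'; split=> //; move: el; rewrite lg; apply: addrI.
    have ld := hf _ _ _ hd hfd hfd'; split=> //; move: el; rewrite ld; apply: addIr.
  by split; apply: pt_eq.
Qed.
Fixpoint covers n (L : seq (pt n -> Prop)) (x : pt n) : Prop :=
  if L is A :: L' then A x \/ covers L' x else False.
Fixpoint disj n (L : seq (pt n -> Prop)) : Prop :=
  if L is A :: L' then (forall x, A x -> ~ covers L' x) /\ disj L' else True.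
Fixpoint allsp n (L : seq (pt n -> Prop)) : Prop :=
  if L is A :: L' then sprod A /\ allsp L' else True.

Lemma covers_cat n (L1 L2 : seq (pt n -> Prop)) x : covers (L1 ++ L2) x <-> covers L1 x \/ covers L2 x.
Proof.
elim: L1 => [|A L1 IH] /=; first by split; [right|case].
rewrite IH; tauto.
Qed.
Lemma allsp_cat n (L1 L2 : seq (pt n -> Prop)) : allsp L1 -> allsp L2 -> allsp (L1 ++ L2).
Proof. by elim: L1 => [|A L1 IH] //= [h1 h2] h3; split=> //; apply: IH. Qed.
Lemma disj_cat n (L1 L2 : seq (pt n -> Prop)) : disj L1 -> disj L2 ->
  (forall x, covers L1 x -> covers L2 x -> False) -> disj (L1 ++ L2).
Proof.
elim: L1 => [|A L1 IH] /=; first by move=> _ h _.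
move=> [h1 h2] h3 h4; split; last first.
  apply: (IH h2 h3) => x hx hx'; apply: (h4 x) => //; by right.
move=> x hx; rewrite covers_cat => -[h|h]; first exact: h1 hx h.
by apply: (h4 x) => //; left.
Qed.

Lemma combine k (X : pt k -> Prop) (C : pt k.+1 -> Prop) (LX : seq (pt k -> Prop)) :
  allsp LX -> disj LX -> (forall y, covers LX y -> X y) ->
  (forall Y, sprod Y -> (forall y, Y y -> X y) ->
     exists LY, allsp LY /\ disj LY /\ forall z, (Y (proj z) /\ C z) <-> covers LY z) ->
  exists L, allsp L /\ disj L /\ forall z, (covers LX (proj z) /\ C z) <-> covers L z.
Proof.
move=> hsp hd hX hY; elim: LX hsp hd hX => [|Y LX IH] /= hsp hd hX.
  by exists [::]; split=> //; split=> // z; split=> [[]|].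
case: hsp => hsY hsp; case: hd => hdY hd.
have hYX : forall y, Y y -> X y by move=> y hy; apply: hX; left.
have hLX : forall y, covers LX y -> X y by move=> y hy; apply: hX; right.
case: (hY Y hsY hYX) => LY [h1 [h2 h3]].
case: (IH hsp hd hLX) => L [h4 [h5 h6]].
exists (LY ++ L); split; first exact: allsp_cat.
split.
  apply: disj_cat => // z; rewrite -h3 -h6 => -[hy _] [hy' _].
  exact: hdY hy hy'.
move=> z; rewrite covers_cat -h3 -h6; tauto.
Qed.

Lemma covers_nth n (L : seq (pt n -> Prop)) x :
  covers L x <-> exists i, (i < size L)%N /\ nth (fun _ => False) L i x.
Proof.
elim: L => [|A L IH] /=; first by split=> // -[i []].
rewrite IH; split.
  case=> [h|[i [hi h]]]; first by exists 0%N.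
  by exists i.+1.
by case=> -[|i] [hi h] /=; [left|right; exists i].
Qed.
Lemma disj_nth n (L : seq (pt n -> Prop)) i j x : disj L -> (i < size L)%N -> (j < size L)%N ->
  nth (fun _ => False) L i x -> nth (fun _ => False) L j x -> i = j.
Proof.
elim: L i j => [|A L IH] [|i] [|j] //= [h1 h2] hi hj hx hy.
- by case: (h1 x hx); apply/covers_nth; exists j.
- by case: (h1 x hy); apply/covers_nth; exists i.
- by congr S; apply: IH hx hy.
Qed.

Definition bndon n (D : pt n -> Prop) (f : pt n -> M) := exists N, leM 0 N /\ forall d, D d -> bnd N (f d).
Lemma bndon_const n (D : pt n -> Prop) c : bndon D (fun _ => c).
Proof. by case: (bnd_of c) => N [h1 h2]; exists N. Qed.
Lemma bndon_add n (D : pt n -> Prop) f g : bndon D f -> bndon D g -> bndon D (fun x => f x + g x).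
Proof.
case=> N [hN h] [N' [hN' h']]; exists (N + N'); split; first by rewrite -(addr0 0); apply: le_add.
by move=> d hd; apply: bnd_add; [apply: h|apply: h'].
Qed.
Lemma bndon_scale n (D : pt n -> Prop) (r : R) f : bndon D f -> bndon D (fun x => r *: f x).
Proof.
case=> N [hN h]; case: (scale_bound r hN) => N' [hN' h']; exists N'; split=> // d hd.
by apply: h'; apply: h.
Qed.
Lemma bndon_sum n m (D : pt n -> Prop) (G : 'I_m -> pt n -> M) :
  (forall i, bndon D (G i)) -> bndon D (fun x => \sum_(i < m) G i x).
Proof.
elim: m G => [|m IH] G hG.
  case: (bndon_const D 0) => N [hN h]; exists N; split=> // d hd; rewrite big_ord0; exact: (h d hd).
case: (bndon_add (IH (fun i => G (widen_ord (leqnSn m) i)) (fun i => hG _)) (hG ord_max)) => N [hN h].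
by exists N; split=> // d hd; rewrite big_ord_recr; apply: h.
Qed.
Lemma bndon_aff n (D : pt n -> Prop) f : bounded_set lt D -> aff f -> bndon D f.
Proof.
move=> [N [hN hb]] [a ha].
have h1 : bndon D (fun x => \sum_(i < n) (fun i x => lcoef a i *: x i) i x).
  apply: bndon_sum => i; apply: bndon_scale; exists N; split=> // d hd; exact: hb.
case: (bndon_add h1 (bndon_const D (lconst a))) => N' [hN' h'].
by exists N'; split=> // d hd; rewrite ha; apply: h'.
Qed.
Lemma bnd_of_bndon n (D : pt n -> Prop) f g :
  bndon D f -> bndon D g -> exists N, leM 0 N /\ forall d s, D d -> leM (f d) s -> leM s (g d) -> bnd N s.
Proof.
case=> N [hN h] [N' [hN' h']]; exists (N + N'); split; first by rewrite -(addr0 0); apply: le_add.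
have l1 : leM N (N + N') by rewrite -{1}(addr0 N); apply: le_add => //; apply: le_refl.
have l2 : leM N' (N + N') by rewrite -{1}(add0r N'); apply: le_add => //; apply: le_refl.
move=> d s hd hs1 hs2; apply: (bnd_between (bnd_mono (h _ hd) l1) (bnd_mono (h' _ hd) l2)) => //.
Qed.
Lemma subDl (u v : M) : u + v - u = v.
Proof. by rewrite addrC addKr. Qed.
Lemma subBr (x y : M) : x - (x - y) = y.
Proof. by rewrite opprB addrC subrK. Qed.
Lemma lt_sub_r (u v w : M) : lt (u + v) w -> lt u (w - v).
Proof. by move=> h; have := ltD2r (- v) h; rewrite addrK. Qed.
Lemma lt_sub_l (u v w : M) : lt w (u + v) -> lt (w - v) u.
Proof. by move=> h; have := ltD2r (- v) h; rewrite addrK. Qed.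
Lemma lt_add_pos (u v : M) : lt 0 v -> lt u (u + v).
Proof. by move=> h; have := ltD2l u h; rewrite addr0. Qed.
Lemma le_add_pos (u v : M) : leM 0 v -> leM u (u + v).
Proof. by move=> h; have := le_add (le_refl u) h; rewrite addr0. Qed.
Lemma swap4 (a b c d : M) : b + d = (a + c) + ((b - a) + (d - c)).
Proof. by rewrite addrACA [a + _]addrC [c + _]addrC !subrK. Qed.
Lemma swap2 (w v c : M) : w + v = (v + c) + (w - c).
Proof. by rewrite addrACA subrr addr0 addrC. Qed.

Lemma big_fiber (p q N : M) : leM 0 N -> lt N (q - p) ->
  exists t1 t2, lt p t1 /\ lt t1 q /\ lt p t2 /\ lt t2 q /\ lt (t1 + N) t2.
Proof.
move=> hN h.
have h1 : lt p (q - N).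
  by have := ltD2r (p - N) h; rewrite addrCA subrr addr0 addrA subrK.
case: (midpoint h1) => t1 [h2 h3].
have h4 : lt (t1 + N) q by have := ltD2r N h3; rewrite subrK.
case: (midpoint h4) => t2 [h5 h6].
have lt12 : lt t1 t2 by apply: le_lt_trans (le_add_pos t1 hN) h5.
exists t1, t2; split=> //; split; first by apply: lt_trans lt12 h6.
split; first by apply: lt_trans h2 lt12.
by split.
Qed.

Section Piece.
Variables (k : nat) (Y J D : pt k -> Prop) (P : pt k -> pt k).
Hypothesis hYd : sdata Y J D P.
Hypothesis hYc : linear_cell lt Y.

Let dP (y : pt k) := psub y (P y).
Lemma pJ : linear_cell lt J. Proof. by case: hYd => h _. Qed.
Lemma ppJ : purely_unbounded lt J. Proof. by case: hYd => _ [h _]. Qed.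
Lemma pD : linear_cell lt D. Proof. by case: hYd => _ [_ [h _]]. Qed.
Lemma pbD : bounded_set lt D. Proof. by case: hYd => _ [_ [_ [h _]]]. Qed.
Lemma pP i : aff (fun y => P y i). Proof. by case: hYd => _ [_ [_ [_ [h _]]]]; apply: h. Qed.
Lemma Y_split y : Y y -> J (P y) /\ D (dP y). Proof. by case: hYd => _ [_ [_ [_ [_ [h _]]]]]; apply: h. Qed.
Lemma Y_sum g d : J g -> D d -> Y (padd g d). Proof. by case: hYd => _ [_ [_ [_ [_ [_ [h _]]]]]]; apply: h. Qed.
Lemma P_sum g d : J g -> D d -> P (padd g d) = g /\ dP (padd g d) = d.
Proof. by move=> hg hd; exact: (sdata_P hYd hg hd). Qed.
Lemma lev_split (a : linmap M k) y : leval a y = lin a (P y) + leval a (dP y).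
Proof. by rewrite -leval_add padd_sub. Qed.
Lemma aff_Pz f : aff f -> aff (fun z : pt k.+1 => f (P (proj z))).
Proof. by move=> h; apply: (aff_comp (F := fun z : pt k.+1 => P (proj z)) h) => i; apply: (aff_proj (pP i)). Qed.
Lemma aff_dy f : aff f -> aff (fun y => f (dP y)).
Proof. by move=> h; apply: (aff_comp (F := fun y => psub y (P y)) h) => i; apply: aff_sub (aff_coord i) (pP i). Qed.
Lemma aff_dz f : aff f -> aff (fun z : pt k.+1 => f (dP (proj z))).
Proof. by move=> h; exact: (aff_proj (aff_dy h)). Qed.
Lemma J_ne : exists g, J g. Proof. exact: cell_ne pJ. Qed.
Lemma bnd_graphD f : aff f -> exists N, leM 0 N /\ forall d s, D d -> s = f d -> bnd N s.
Proof. by move=> h; case: (bndon_aff pbD h) => N [hN hb]; exists N; split=> // d s hd ->; apply: hb. Qed.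

Lemma piece_graph (a : linmap M k) : sprod (fib Y (fun y t => t = leval a y)).
Proof.
apply: (GB (FJ := fun g t => t = lin a g) (FD := fun d s => s = leval a d)
           (tau := fun z => lin a (P (proj z))) hYd).
- exact: cell_graph hYc (aff_leval a).
- exact: cell_graph pJ (aff_lin a).
- exact: pu_graph ppJ.
- exact: cell_graph pD (aff_leval a).
- exact: bnd_graphD (aff_leval a).
- exact: aff_Pz (aff_lin a).
- by move=> z [hy ht]; split=> //; split=> //; rewrite ht lev_split subDl.
- by move=> g d t s hg hd -> ->; apply/fib_ext; split; [apply: Y_sum|rewrite leval_add].
- by left=> g t t' _ -> ->.
Qed.

Lemma piece_ii : sprod (fib Y (fun y t => ext_lt lt (eeval (@NegInf _ M k) y) (MFin t) /\ ext_lt lt (MFin t) (eeval (@PosInf _ M k) y))).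
Proof.
apply: (GB (FJ := fun g t => True) (FD := fun d s => s = (fun _ => 0) d)
           (tau := fun z => lastc z) hYd).
- by apply: cell_cyl hYc _.
- exact: cell_cyl_ii pJ.
- apply: pu_fib ppJ _ _; first by move=> y _; exists 0.
  move=> N hN; case: J_ne => g hg; exists g; split=> //; exists 0, (N + e0); split=> //; split=> //.
  by rewrite add0r; apply: lt_addpos.
- exact: cell_graph pD (aff_const _ 0).
- by exists 0; split; [right|move=> d s _ ->; apply: bnd0; right].
- exact: aff_last.
- by move=> z [hy _]; split=> //; split=> //; rewrite subrr.
- by move=> g d t s hg hd _ ->; apply/fib_ext; split; [apply: Y_sum|].
- by right=> d s s' _ -> ->.
Qed.

Lemma piece_fi (al : linmap M k) : sprod (fib Y (fun y t => ext_lt lt (eeval (Fin al) y) (MFin t) /\ ext_lt lt (MFin t) (eeval (@PosInf _ M k) y))).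
Proof.
apply: (GB (FJ := fun g t => lt (lin al g) t) (FD := fun d s => s = leval al d)
           (tau := fun z => lastc z - leval al (dP (proj z))) hYd).
- by apply: cell_cyl hYc _.
- exact: cell_cyl_fi pJ (aff_lin al).
- apply: pu_fib ppJ _ _; first by move=> y _; exists (lin al y + e0); apply: lt_addpos.
  move=> N hN; case: J_ne => g hg; exists g; split=> //.
  exists (lin al g + e0), (lin al g + e0 + N + e0); split; first by apply: lt_addpos.
  split; last by apply: lt_addpos.
  apply: lt_le_trans (lt_addpos _) _; rewrite -addrA; apply: le_add_pos.
  by rewrite -(addr0 0); apply: le_add => //; left.
- exact: cell_graph pD (aff_leval al).
- exact: bnd_graphD (aff_leval al).
- exact: aff_sub (aff_last _) (aff_dz (aff_leval al)).
- move=> z [hy [h1 _]]; split=> //; split; last by rewrite subBr.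
  by apply: lt_sub_r; rewrite -lev_split.
- move=> g d t s hg hd ht ->; apply/fib_ext; split; first by apply: Y_sum.
  by split=> //=; rewrite leval_add; apply: ltD2r.
- by right=> d s s' _ -> ->.
Qed.

Lemma piece_if (be : linmap M k) : sprod (fib Y (fun y t => ext_lt lt (eeval (@NegInf _ M k) y) (MFin t) /\ ext_lt lt (MFin t) (eeval (Fin be) y))).
Proof.
apply: (GB (FJ := fun g t => lt t (lin be g)) (FD := fun d s => s = leval be d)
           (tau := fun z => lastc z - leval be (dP (proj z))) hYd).
- by apply: cell_cyl hYc _.
- exact: cell_cyl_if pJ (aff_lin be).
- apply: pu_fib ppJ _ _; first by move=> y _; exists (lin be y - e0); apply: lt_subpos.
  move=> N hN; case: J_ne => g hg; exists g; split=> //.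
  set t2 := lin be g - e0.
  have h1 : leM (t2 - e0 - N) (t2 - e0) by have := le_add_pos (t2 - e0 - N) hN; rewrite subrK.
  have h2 : lt t2 (lin be g) by apply: lt_subpos.
  exists (t2 - e0 - N), t2; split.
    by apply: le_lt_trans h1 (lt_trans (lt_subpos _) h2).
  split=> //; rewrite subrK; apply: lt_subpos.
- exact: cell_graph pD (aff_leval be).
- exact: bnd_graphD (aff_leval be).
- exact: aff_sub (aff_last _) (aff_dz (aff_leval be)).
- move=> z [hy [_ h1]]; split=> //; split; last by rewrite subBr.
  by apply: lt_sub_l; rewrite -lev_split.
- move=> g d t s hg hd ht ->; apply/fib_ext; split; first by apply: Y_sum.
  by split=> //=; rewrite leval_add; apply: ltD2r.
- by right=> d s s' _ -> ->.
Qed.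
Lemma single n (A : pt n -> Prop) : sprod A ->
  exists L, allsp L /\ disj L /\ forall z, A z <-> covers L z.
Proof. by move=> h; exists [:: A]; split=> //; split; [split=> // x _ []|move=> z /=; tauto]. Qed.

Section FinFin.
Variables (al be : linmap M k).
Hypothesis hab : forall y, Y y -> lt (leval al y) (leval be y).

Let W g := lin be g - lin al g.
Let V d := leval be d - leval al d.
Lemma affW : aff W. Proof. exact: aff_sub (aff_lin be) (aff_lin al). Qed.
Lemma affV : aff V. Proof. exact: aff_sub (aff_leval be) (aff_leval al). Qed.
Lemma lev_be y : leval be y = leval al y + (W (P y) + V (dP y)).
Proof. by rewrite (lev_split be) (lev_split al) /W /V; apply: swap4. Qed.
Lemma wpos g d : J g -> D d -> lt 0 (W g + V d).
Proof.
move=> hg hd; have := hab (Y_sum hg hd); rewrite lev_be; case: (P_sum hg hd) => -> -> h.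
by apply: (ltD2lE (z := leval al (padd g d))); rewrite addr0.
Qed.
Let Fab := fun y t => lt (leval al y) t /\ lt t (leval be y).
Lemma cellS : linear_cell lt (fib Y Fab).
Proof. exact: cell_cyl_ff hYc (aff_leval al) (aff_leval be) hab. Qed.

Lemma piece_ff : exists L, allsp L /\ disj L /\ forall z, fib Y Fab z <-> covers L z.
Proof.
case: (classic (bndon J W)) => hW.
  case: J_ne => g0 hg0.
  have Wc : forall g, J g -> W g = W g0 by move=> g hg; apply: (rigid pJ affW ppJ hW hg hg0).
  apply: single.
  apply: (GB (FJ := fun g t => t = lin al g)
             (FD := fun d s => lt (leval al d) s /\ lt s (leval al d + (W g0 + V d)))
             (tau := fun z => lin al (P (proj z))) hYd).
  - exact: cellS.
  - exact: cell_graph pJ (aff_lin al).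
  - exact: pu_graph ppJ.
  - apply: cell_cyl_ff pD (aff_leval al) (aff_add (aff_leval al) (aff_add (aff_const _ (W g0)) affV)) _.
    by move=> d hd; apply: lt_add_pos; apply: wpos.
  - case: (bnd_of_bndon (bndon_aff pbD (aff_leval al))
             (bndon_aff pbD (aff_add (aff_leval al) (aff_add (aff_const _ (W g0)) affV)))) => N [hN hb].
    by exists N; split=> // d s hd [h1 h2]; apply: hb hd (ltW h1) (ltW h2).
  - exact: aff_Pz (aff_lin al).
  - move=> z [hy [h1 h2]]; split=> //; split=> //; case: (Y_split hy) => hPJ _; split.
      by apply: lt_add_sub2; rewrite -lev_split.
    by apply: lt_add_sub; rewrite addrA -lev_split -(Wc _ hPJ) -lev_be.
  - move=> g d t s hg hd -> [h1 h2]; apply/fib_ext; split; first by apply: Y_sum.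
    split; first by rewrite leval_add; apply: ltD2l.
    rewrite lev_be; case: (P_sum hg hd) => -> ->; rewrite leval_add (Wc g hg) -addrA.
    exact: ltD2l.
  - by left=> g t t' _ -> ->.
case: (bndon_aff pbD affV) => NV [hNV hbV].
case: (sup_ex pD (aff_opp affV) _) => [|a0 [ha1 ha2]].
  exists NV => d hd; case: (hbV d hd) => h _; by have := le_opp h; rewrite opprK.
have Wge : forall g, J g -> leM a0 (W g).
  move=> g hg; apply: ha2 => d hd; left; apply/lt_subr; rewrite opprK; exact: wpos.
have Wgt : forall g, J g -> lt a0 (W g).
  move=> g hg; apply: NNPP => hn.
  have e : W g = a0 := le_anti (not_lt hn) (Wge g hg).
  have hex : exists g', J g' /\ W g' <> W g.
    apply: NNPP => hc; apply: hW; case: (bnd_of (W g)) => N [hN hb]; exists N; split=> // g' hg'.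
    by have -> : W g' = W g by apply: NNPP => hne; apply: hc; exists g'.
  case: (open_lower pJ affW hg hex) => g2 [hg2 hl].
  by apply: le_lt_false (Wge g2 hg2) _; rewrite -e.
have psi_pos : forall g, J g -> lt 0 (W g - a0) by move=> g hg; exact: (proj1 (lt_subr _ _) (Wgt g hg)).
have affU : aff (fun g => lin al g + (W g - a0)).
  exact: aff_add (aff_lin al) (aff_sub affW (aff_const _ a0)).
have cellU : linear_cell lt (fib J (fun g t => lt (lin al g) t /\ lt t (lin al g + (W g - a0)))).
  by apply: cell_cyl_ff pJ (aff_lin al) affU _ => g hg; apply: lt_add_pos; apply: psi_pos.
have puU : purely_unbounded lt (fib J (fun g t => lt (lin al g) t /\ lt t (lin al g + (W g - a0)))).
  apply: pu_fib ppJ _ _.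
    by move=> g hg; apply: midpoint; apply: lt_add_pos; apply: psi_pos.
  move=> N hN; case: (bnd_of a0) => B [hB [hB1 hB2]].
  have hN' : leM 0 (N + B) by rewrite -(addr0 0); apply: le_add.
  have [g [hg hng]] : exists g, J g /\ ~ bnd (N + B) (W g).
    apply: NNPP => hc; apply: hW; exists (N + B); split=> // g hg.
    by apply: NNPP => hn; apply: hc; exists g.
  have h1 : leM (- (N + B)) a0.
    apply: le_trans hB1; apply: le_opp; rewrite addrC; exact: le_add_pos.
  have h2 : lt (N + B) (W g).
    apply: not_le => hle; apply: hng; split=> //; left; apply: le_lt_trans h1 (Wgt g hg).
  have h3 : lt N (W g - a0).
    apply: le_lt_trans _ (ltD2r (- a0) h2); rewrite -addrA; apply: le_add_pos.
    by move/le_subr: hB2.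
  case: (big_fiber (p := lin al g) (q := lin al g + (W g - a0)) hN) => [|t1 [t2 [h4 [h5 [h6 [h7 h8]]]]]].
    by rewrite subDl.
  by exists g; split=> //; exists t1, t2.
case: (classic (forall d, D d -> lt 0 (V d + a0))) => hchi; last first.
  have [d1 [hd1 hn]] : exists d1, D d1 /\ ~ lt 0 (V d1 + a0).
    by apply: NNPP => hc; apply: hchi => d hd; apply: NNPP => hn; apply: hc; exists d.
  have e1 : V d1 = - a0.
    have : leM 0 (V d1 + a0) by move/le_subr: (ha1 d1 hd1); rewrite opprK addrC.
    move=> h0; have e0' : V d1 + a0 = 0 by apply: esym; apply: le_anti h0 (not_lt hn).
    by rewrite -[V d1](addrK a0) e0' add0r.
  have Vc : forall d, D d -> V d = - a0.
    move=> d hd; rewrite -e1; apply: NNPP => hne.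
    case: (open_lower pD affV hd1) => [|d2 [hd2 hl]]; first by exists d; split.
    apply: (le_lt_false (ha1 d2 hd2)) => /=.
    by have := lt_opp hl; rewrite e1 opprK.
  apply: single.
  apply: (GB (FJ := fun g t => lt (lin al g) t /\ lt t (lin al g + (W g - a0)))
             (FD := fun d s => s = leval al d)
             (tau := fun z => lastc z - leval al (dP (proj z))) hYd).
  - exact: cellS.
  - exact: cellU.
  - exact: puU.
  - exact: cell_graph pD (aff_leval al).
  - exact: bnd_graphD (aff_leval al).
  - exact: aff_sub (aff_last _) (aff_dz (aff_leval al)).
  - move=> z [hy [h1 h2]]; case: (Y_split hy) => hPJ hPD; split=> //; split; last by rewrite subBr.
    split; first by apply: lt_sub_r; rewrite -lev_split.
    apply: lt_sub_l; move: h2; rewrite lev_be (Vc _ hPD) (lev_split al) addrAC.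
    by [].
  - move=> g d t s hg hd [h1 h2] ->; apply/fib_ext; split; first by apply: Y_sum.
    split; first by rewrite leval_add; apply: ltD2r.
    rewrite lev_be; case: (P_sum hg hd) => -> ->; rewrite leval_add (Vc _ hd) addrAC.
    exact: ltD2r.
  - by right=> d s s' _ -> ->.
set chi := fun d => V d + a0.
set sig := fun y => leval al y + chi (dP y).
have affchi : aff chi by apply: aff_add affV (aff_const _ a0).
have affsig : aff sig by apply: aff_add (aff_leval al) (aff_dy affchi).
have sig_split : forall y, sig y = lin al (P y) + (leval al (dP y) + chi (dP y)).
  by move=> y; rewrite /sig (lev_split al) -addrA.
have be_sig : forall y, leval be y = sig y + (W (P y) - a0).
  by move=> y; rewrite lev_be /sig /chi (swap2 (W (P y)) (V (dP y)) a0) addrA.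
have al_sig : forall y, Y y -> lt (leval al y) (sig y).
  by move=> y hy; case: (Y_split hy) => _ hd; apply: lt_add_pos; apply: hchi.
have sig_be : forall y, Y y -> lt (sig y) (leval be y).
  by move=> y hy; case: (Y_split hy) => hg _; rewrite be_sig; apply: lt_add_pos; apply: psi_pos.
have bndchi : exists N, leM 0 N /\ forall d s, D d -> lt (leval al d) s /\ lt s (leval al d + chi d) -> bnd N s.
  case: (bnd_of_bndon (bndon_aff pbD (aff_leval al)) (bndon_aff pbD (aff_add (aff_leval al) affchi))) => N [hN hb].
  by exists N; split=> // d s hd [h1 h2]; apply: hb hd (ltW h1) (ltW h2).
have spL : sprod (fib Y (fun y t => lt (leval al y) t /\ lt t (sig y))).
  apply: (GB (FJ := fun g t => t = lin al g)
             (FD := fun d s => lt (leval al d) s /\ lt s (leval al d + chi d))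
             (tau := fun z => lin al (P (proj z))) hYd).
  - exact: cell_cyl_ff hYc (aff_leval al) affsig al_sig.
  - exact: cell_graph pJ (aff_lin al).
  - exact: pu_graph ppJ.
  - apply: cell_cyl_ff pD (aff_leval al) (aff_add (aff_leval al) affchi) _.
    by move=> d hd; apply: lt_add_pos; apply: hchi.
  - exact: bndchi.
  - exact: aff_Pz (aff_lin al).
  - move=> z [hy [h1 h2]]; split=> //; split=> //; split.
      by apply: lt_add_sub2; rewrite -lev_split.
    by apply: lt_add_sub; rewrite -sig_split.
  - move=> g d t s hg hd -> [h1 h2]; apply/fib_ext; split; first by apply: Y_sum.
    split; first by rewrite leval_add; apply: ltD2l.
    by rewrite sig_split; case: (P_sum hg hd) => -> ->; apply: ltD2l.
  - by left=> g t t' _ -> ->.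
have spG : sprod (fib Y (fun y t => t = sig y)).
  apply: (GB (FJ := fun g t => t = lin al g)
             (FD := fun d s => s = leval al d + chi d)
             (tau := fun z => lin al (P (proj z))) hYd).
  - exact: cell_graph hYc affsig.
  - exact: cell_graph pJ (aff_lin al).
  - exact: pu_graph ppJ.
  - exact: cell_graph pD (aff_add (aff_leval al) affchi).
  - exact: bnd_graphD (aff_add (aff_leval al) affchi).
  - exact: aff_Pz (aff_lin al).
  - by move=> z [hy h]; split=> //; split=> //; rewrite h sig_split subDl.
  - move=> g d t s hg hd -> ->; apply/fib_ext; split; first by apply: Y_sum.
    by rewrite sig_split; case: (P_sum hg hd) => -> ->.
  - by left=> g t t' _ -> ->.
have spU : sprod (fib Y (fun y t => lt (sig y) t /\ lt t (leval be y))).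
  apply: (GB (FJ := fun g t => lt (lin al g) t /\ lt t (lin al g + (W g - a0)))
             (FD := fun d s => s = leval al d + chi d)
             (tau := fun z => lastc z - (leval al (dP (proj z)) + chi (dP (proj z)))) hYd).
  - exact: cell_cyl_ff hYc affsig (aff_leval be) sig_be.
  - exact: cellU.
  - exact: puU.
  - exact: cell_graph pD (aff_add (aff_leval al) affchi).
  - exact: bnd_graphD (aff_add (aff_leval al) affchi).
  - exact: aff_sub (aff_last _) (aff_dz (aff_add (aff_leval al) affchi)).
  - move=> z [hy [h1 h2]]; split=> //; split; last by rewrite subBr.
    split; first by apply: lt_sub_r; rewrite -sig_split.
    apply: lt_sub_l; move: h2; rewrite be_sig sig_split addrAC.
    by [].
  - move=> g d t s hg hd [h1 h2] ->; apply/fib_ext; split; first by apply: Y_sum.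
    split; first by rewrite sig_split; case: (P_sum hg hd) => -> ->; apply: ltD2r.
    rewrite be_sig sig_split; case: (P_sum hg hd) => -> ->; rewrite (addrAC (lin al g)).
    exact: ltD2r.
  - by right=> d s s' _ -> ->.
exists [:: fib Y (fun y t => lt (leval al y) t /\ lt t (sig y));
          fib Y (fun y t => t = sig y);
          fib Y (fun y t => lt (sig y) t /\ lt t (leval be y))].
split; first by [].
split.
  split; first by move=> x [_ [_ h1]] [[_ h2]|[[_ [h2 _]]|[]]]; [rewrite h2 in h1; apply: ltxx h1|apply: lt_asym h1 h2].
  split; first by move=> x [_ h1] [[_ [h2 _]]|[]]; rewrite h1 in h2; apply: ltxx h2.
  by split=> // x _ [].
move=> z; split.
  move=> [hy [h1 h2]] /=; case: (lt_tri (lastc z) (sig (proj z))) => [h|[h|h]].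
  - by left.
  - by right; left.
  - by right; right; left.
case=> [[hy [h1 h2]]|[[hy h]|[[hy [h1 h2]]|[]]]]; split=> //; split=> //.
- by apply: lt_trans h2 (sig_be _ hy).
- by rewrite h; apply: al_sig.
- by rewrite h; apply: sig_be.
- by apply: lt_trans (al_sig _ hy) h1.
Qed.
End FinFin.
End Piece.

Lemma allsp_nth n (L : seq (pt n -> Prop)) i : allsp L -> (i < size L)%N -> sprod (nth (fun _ => False) L i).
Proof. by elim: L i => [|A L IH] [|i] //= [h1 h2] hi //; exact: IH h2 hi. Qed.

Lemma base_sprod (C : pt 0 -> Prop) : (forall x, C x) -> sprod C.
Proof.
move=> hC; have hc : linear_cell lt C by apply: lc0.
split=> //; exists C, C, (fun x => x); split=> //; split; first by [].
split=> //; split; first by exists 0; split; [right|move=> d _ []].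
split; first by move=> i; apply: aff_coord.
split; first by move=> x _; split.
split; first by move=> g d _ _.
by move=> g g' d d' _ _ _ _ _; split; apply: pt0_eq.
Qed.

Lemma main n (C : pt n -> Prop) : linear_cell lt C ->
  exists L, allsp L /\ disj L /\ forall x, C x <-> covers L x.
Proof.
elim=> {n C} [C hC|k X a C hX [LX [h1 [h2 h3]]] hC|k X a b C hX [LX [h1 [h2 h3]]] hab hC].
- by apply: single; apply: base_sprod.
- move: (fib_graph_eq hC) => ? {hC}; subst C.
  case: (@combine k X (fib X (fun y t => t = leval a y)) LX h1 h2 (fun y => proj2 (h3 y))).
    move=> Y [hYc [J [D [P hYd]]]] hYX.
    case: (single (piece_graph hYd hYc a)) => LY [g1 [g2 g3]].
    exists LY; split=> //; split=> // z; rewrite -g3.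
    by split=> [[hy [_ h]]|[hy h]]; split=> //; split=> //; apply: hYX.
  move=> L [g1 [g2 g3]]; exists L; split=> //; split=> // z; rewrite -g3.
  by split=> [[hx h]|[_ h]]; [split=> //; apply/h3|].
- move: (fib_cyl_eq hC) => ? {hC}; subst C.
  set F := (fun y t => ext_lt lt (eeval a y) (MFin t) /\ ext_lt lt (MFin t) (eeval b y)).
  case: (@combine k X (fib X F) LX h1 h2 (fun y => proj2 (h3 y))).
    move=> Y [hYc [J [D [P hYd]]]] hYX.
    suff [LY [g1 [g2 g3]]] : exists LY, allsp LY /\ disj LY /\ forall z, fib Y F z <-> covers LY z.
      exists LY; split=> //; split=> // z; rewrite -g3.
      by split=> [[hy [_ h]]|[hy h]]; split=> //; split=> //; apply: hYX.
    rewrite /F; clear F; move: hab; case: a => [|al|]; case: b => [|be|] hab.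
    + by exists [::]; split=> //; split=> // z; split=> [[_ [_ []]]|[]].
    + exact: single (piece_if hYd hYc be).
    + exact: single (piece_ii hYd hYc).
    + by exists [::]; split=> //; split=> // z; split=> [[_ [_ []]]|[]].
    + have hab' : forall y, Y y -> lt (leval al y) (leval be y) by move=> y hy; apply: (hab y (hYX y hy)).
      exact: (piece_ff hYd hYc hab').
    + exact: single (piece_fi hYd hYc al).
    + by exists [::]; split=> //; split=> // z; split=> [[_ [[] _]]|[]].
    + by exists [::]; split=> //; split=> // z; split=> [[_ [[] _]]|[]].
    + by exists [::]; split=> //; split=> // z; split=> [[_ [[] _]]|[]].
  move=> L [g1 [g2 g3]]; exists L; split=> //; split=> // z; rewrite -g3.
  by split=> [[hx h]|[_ h]]; [split=> //; apply/h3|].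
Qed.
End Main.

Lemma triv_all (R : nzRingType) (M : lmodType R) n : (forall m : M, m = 0) -> forall x y : pt M n, x = y.
Proof. by move=> h x y; apply: functional_extensionality => i; rewrite (h (x i)) (h (y i)). Qed.

Lemma triv_pu (R : nzRingType) (M : lmodType R) (lt : M -> M -> Prop) n (C : pt M n -> Prop) :
  (forall m : M, m = 0) -> (exists x, C x) -> purely_unbounded lt C.
Proof.
move=> h; elim: n C => [|k IH] C [x hx] /=.
  by move=> y; rewrite (triv_all h y x).
left; split.
  by move=> z z' _ _ _; rewrite (h (lastc z)) (h (lastc z')).
by apply: IH; exists (proj x), x; split.
Qed.

Theorem propositionA2 (R : nzRingType) (ltR : R -> R -> Prop)
    (M : lmodType R) (ltM : M -> M -> Prop) (n : nat) (C : pt M n -> Prop) :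
  ordered_division_ring ltR ->
  ordered_vector_space ltR ltM ->
  linear_cell ltM C ->
  exists (m : nat) (P : 'I_m -> pt M n -> Prop),
    (forall i, product_cell ltM (P i)) /\
    (forall i j, i != j -> forall x, P i x -> P j x -> False) /\
    (forall x, C x <-> exists i, P i x).
Proof.
move=> HR HM hC.
case: (classic (exists e, ltM 0 e)) => [[e he]|hne].
  case: (main HR HM he hC) => L [h1 [h2 h3]].
  exists (size L), (fun i => nth (fun _ => False) L i); split.
    by move=> i; apply: sprod_pc; apply: allsp_nth h1 (ltn_ord i).
  split.
    move=> i j hij x hi hj; move/negP: hij; apply; apply/eqP; apply: val_inj.
    exact: disj_nth h2 (ltn_ord i) (ltn_ord j) hi hj.
  move=> x; rewrite h3 covers_nth; split.
    by case=> i [hi h]; exists (Ordinal hi).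
  by case=> i h; exists i; split=> //; apply: ltn_ord.
have triv : forall m : M, m = 0.
  case: HM => [[_ [_ tri]] [addc _]] m.
  case: (tri 0 m) => [h|[h|h]]; first by case: hne; exists m.
    by [].
  case: hne; exists (- m); have := addc _ _ (- m) h; by rewrite subrr add0r.
case: (classic (exists x, C x)) => [hx|hnx].
  exists 1%N, (fun _ => C); split.
    move=> _; split=> //; exists C, C; split=> //; split; first exact: triv_pu.
    split=> //; split.
      by exists 0; split; [right|move=> d _ i; rewrite (triv (d i)) oppr0; split; right].
    split.
      move=> c; split.
        by move=> hc; exists c, c; split=> //; split=> // i; rewrite (triv (c i)) addr0.
      by case=> g [d [hg [hd _]]]; rewrite (triv_all triv c g).
    by move=> g g' d d' _ _ _ _ _; split=> i; [rewrite (triv (g i)) (triv (g' i))|rewrite (triv (d i)) (triv (d' i))].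
  split; first by move=> i j; rewrite !ord1.
  by move=> x; split=> [h|[_ h]] //; exists ord0.
exists 0%N, (fun _ _ => False); split; first by case.
split; first by case.
by move=> x; split=> [h|[[]]] //; case: hnx; exists x.
Qed.
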